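(* Let $N\ge 2$ be an integer and $\tau>0$. For $t\in\{0,\tau,2\tau,\dots\}$ let $u_j^t=u(j,t)$, $j=0,\dots,N$, be defined by prescribed initial values $u(j,0)$, the Dirichlet boundary condition $u_0^t=u_N^t=0$ for all $t$, and the iteration, for $j=1,\dots,N-1$, $$u_j^{t+\tau}=u_j^t+\frac{u_j^tu_{j-1}^t}{2}\bigl(u_j^t+u_{j-1}^t-1\bigr)\bigl(u_{j-1}^t-u_j^t\bigr)+\frac{u_j^tu_{j+1}^t}{2}\bigl(u_j^t+u_{j+1}^t-1\bigr)\bigl(u_{j+1}^t-u_j^t\bigr).$$ Suppose $1/2\le u(j,0)\le 1$ for $j=1,\dots,N-1$. Then for all $t\in\{0,\tau,2\tau,\dots\}$ and all $j=1,\dots,N-1$, $$\min_{1\le i\le N-1}u(i,0)\le u(j,t)\le \max_{1\le i\le N-1}u(i,0).$$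
   Context: This is an aggregation–diffusion lattice model on the grid points $x_j=j/N$ with time step $\tau$; the value $1/2$ is the density threshold $\alpha$ separating aggregation (below) and diffusion (above). *)

(* Defs.v *)
From mathcomp Require Import all_boot all_order all_algebra.
Set Implicit Arguments. Unset Strict Implicit. Unset Printing Implicit Defensive.
Import Order.TTheory GRing.Theory Num.Theory.
Local Open Scope ring_scope.

Definition interior (N j : nat) : bool := (0 < j)%N && (j < N)%N.

Definition step (R : realFieldType) (N : nat) (v : nat -> R) : nat -> R :=
  fun j =>
    if interior N j then
      v j
      + (v j * v j.-1) / 2 * (v j + v j.-1 - 1) * (v j.-1 - v j)
      + (v j * v j.+1) / 2 * (v j + v j.+1 - 1) * (v j.+1 - v j)
    else 0.

(* u N u0 n j = u(j, n*tau): the solution after n time steps, with initial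
   interior data u0 and Dirichlet boundary u_0 = u_N = 0. *)
Fixpoint sol (R : realFieldType) (N : nat) (u0 : nat -> R) (n : nat) : nat -> R :=
  match n with
  | 0 => fun j => if interior N j then u0 j else 0
  | n'.+1 => step N (sol N u0 n')
  end.

(* min and max over 1 <= i <= N-1 (seeded with u0 1, which is in the range for N >= 2) *)
Definition min_init (R : realFieldType) (N : nat) (u0 : nat -> R) : R :=
  \big[Num.min/u0 1%N]_(1 <= i < N) u0 i.
Definition max_init (R : realFieldType) (N : nat) (u0 : nat -> R) : R :=
  \big[Num.max/u0 1%N]_(1 <= i < N) u0 i.

(* Main.v *)
Require Import Defs.
From mathcomp Require Import all_boot all_order all_algebra.
From mathcomp Require Import ring lra zify.
Import Order.TTheory GRing.Theory Num.Theory.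
Local Open Scope ring_scope.
Lemma termU (R : realFieldType) (m M a b : R) : 1/2 <= m -> M <= 1 -> m <= a <= M ->
  (b = 0 \/ m <= b <= M) -> (a * b) / 2 * (a + b - 1) * (b - a) <= (M - a) / 2.
Proof.
move=> hm hM /andP[ha1 ha2] [->|/andP[hb1 hb2]]; first by rewrite mulr0 mul0r !mul0r; lra.
have [hab|hab] := lerP b a.
  have h1 : 0 <= a * b / 2 * (a + b - 1) by apply: mulr_ge0; [apply: mulr_ge0; [apply: mulr_ge0|]|]; lra.
  have : a * b / 2 * (a + b - 1) * (b - a) <= 0 by apply: mulr_ge0_le0 => //; lra.
  lra.
have h1 : 0 <= b * (a + b - 1) <= 1.
  apply/andP; split; first by apply: mulr_ge0; lra.
  rewrite -[1]mul1r; apply: ler_pM; lra.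
have h2 : 0 <= a * (b * (a + b - 1)) <= 1.
  apply/andP; split; first by apply: mulr_ge0; lra.
  rewrite -[1]mul1r; apply: ler_pM; lra.
have -> : a * b / 2 * (a + b - 1) * (b - a) = (a * (b * (a + b - 1))) * (b - a) / 2 by ring.
have : (a * (b * (a + b - 1))) * (b - a) <= 1 * (M - a) by apply: ler_pM; lra.
lra.
Qed.
Lemma termL (R : realFieldType) (m M a b : R) : 1/2 <= m -> M <= 1 -> m <= a <= M ->
  (b = 0 \/ m <= b <= M) -> - ((a - m) / 2) <= (a * b) / 2 * (a + b - 1) * (b - a).
Proof.
move=> hm hM /andP[ha1 ha2] [->|/andP[hb1 hb2]]; first by rewrite mulr0 mul0r !mul0r; lra.
have [hab|hab] := lerP a b.
  have h1 : 0 <= a * b / 2 * (a + b - 1) by apply: mulr_ge0; [apply: mulr_ge0; [apply: mulr_ge0|]|]; lra.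
  have : 0 <= a * b / 2 * (a + b - 1) * (b - a) by apply: mulr_ge0 => //; lra.
  lra.
have h1 : 0 <= b * (a + b - 1) <= 1.
  apply/andP; split; first by apply: mulr_ge0; lra.
  rewrite -[1]mul1r; apply: ler_pM; lra.
have h2 : 0 <= a * (b * (a + b - 1)) <= 1.
  apply/andP; split; first by apply: mulr_ge0; lra.
  rewrite -[1]mul1r; apply: ler_pM; lra.
have -> : a * b / 2 * (a + b - 1) * (b - a) = - ((a * (b * (a + b - 1))) * (a - b) / 2) by ring.
have : (a * (b * (a + b - 1))) * (a - b) <= 1 * (a - m) by apply: ler_pM; lra.
lra.
Qed.
Lemma bigmin_le (R : realFieldType) (x0 : R) (F : nat -> R) (r : seq nat) j :
  j \in r -> \big[Num.min/x0]_(i <- r) F i <= F j.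
Proof.
elim: r => [//|i r IH]; rewrite in_cons big_cons => /orP[/eqP->|/IH h].
  by rewrite ge_min lexx.
by rewrite ge_min h orbT.
Qed.
Lemma bigmax_ge (R : realFieldType) (x0 : R) (F : nat -> R) (r : seq nat) j :
  j \in r -> F j <= \big[Num.max/x0]_(i <- r) F i.
Proof.
elim: r => [//|i r IH]; rewrite in_cons big_cons => /orP[/eqP->|/IH h].
  by rewrite le_max lexx.
by rewrite le_max h orbT.
Qed.

Theorem theorem3p3 (R : realFieldType) (N : nat) (tau : R) (u0 : nat -> R) :
  (2 <= N)%N -> 0 < tau ->
  (forall j, (1 <= j <= N.-1)%N -> 1 / 2 <= u0 j <= 1) ->
  forall (n j : nat), (1 <= j <= N.-1)%N ->
    min_init N u0 <= sol N u0 n j <= max_init N u0.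
Proof.
move=> hN _ hu.
have intE j : interior N j = (1 <= j <= N.-1)%N by rewrite /interior; apply/idP/idP => /andP[a b]; apply/andP; split => //; lia.
have h1 : (1 <= 1 <= N.-1)%N by apply/andP; split => //; lia.
have hi i : (1 <= i < N)%N -> (1 <= i <= N.-1)%N by move=> /andP[a b]; apply/andP; split => //; lia.
set m := min_init N u0; set M := max_init N u0.
have hm : 1/2 <= m.
  rewrite /m /min_init big_seq; apply: (big_ind (fun x => 1/2 <= x)).
  - by case/andP: (hu 1%N h1).
  - by move=> x y hx hy; rewrite le_min hx hy.
  - by move=> i; rewrite mem_index_iota => /hi /hu /andP[a b].
have hM : M <= 1.
  rewrite /M /max_init big_seq; apply: (big_ind (fun x => x <= 1)).
  - by case/andP: (hu 1%N h1).
  - by move=> x y hx hy; rewrite ge_max hx hy.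
  - by move=> i; rewrite mem_index_iota => /hi /hu /andP[a b].
have inv : forall n j, (interior N j -> m <= sol N u0 n j <= M) /\ (~~ interior N j -> sol N u0 n j = 0).
  elim=> [|n IH] j /=.
    split; last by move/negbTE => ->.
    move=> hj; rewrite hj; apply/andP; split.
      by apply: bigmin_le; rewrite mem_index_iota; move: hj; rewrite /interior; lia.
    by apply: bigmax_ge; rewrite mem_index_iota; move: hj; rewrite /interior; lia.
  split; last by rewrite /step => /negbTE ->.
  move=> hj; rewrite /step hj.
  have nb k : sol N u0 n k = 0 \/ m <= sol N u0 n k <= M.
    case: (boolP (interior N k)) => hk; first by right; apply: (proj1 (IH k)).
    by left; apply: (proj2 (IH k)).
  have ha := proj1 (IH j) hj.
  have U1 := @termU _ m M _ _ hm hM ha (nb j.-1); have U2 := @termU _ m M _ _ hm hM ha (nb j.+1).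
  have L1 := @termL _ m M _ _ hm hM ha (nb j.-1); have L2 := @termL _ m M _ _ hm hM ha (nb j.+1).
  move: ha => /andP[ha1 ha2].
  apply/andP; split; lra.
by move=> n j hj; apply: (proj1 (inv n j)); rewrite intE.
Qed.
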